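(* Let $(V,E)$ be a finite graph with $E\neq\emptyset$ and let $p\in(0,1)$. Let $(\eta_t,\sigma_t)_{t\geq 0}$ be a continuous-time Markov jump process on $\{0,1\}^E\times\{-1,1\}^V$ with transition rates $q((\eta,\sigma),(\eta',\sigma'))$, such that at each jump at most one site or one edge is updated (i.e. $q((\eta,\sigma),(\eta',\sigma'))=0$ unless $(\eta',\sigma')$ differs from $(\eta,\sigma)$ in at most one spin or at most one edge), and which is reversible with respect to $IP$, i.e. $$IP(\eta,\sigma)\,q((\eta,\sigma),(\eta',\sigma'))=IP(\eta',\sigma')\,q((\eta',\sigma'),(\eta,\sigma))$$ for all $(\eta,\sigma),(\eta',\sigma')$. Let $(\eta,\sigma)\in\mathcal C$ be a pair of compatible configurations. If there exists $x\in V$ such that $q((\eta,\sigma),(\eta,\sigma^x))\neq 0$, then $\eta(e)=0$ for all $e\in E_x$.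
   Context: $(V,E)$ is a finite graph with unoriented edges, $E$ a set of pairs of vertices. An edge configuration is $\eta\in\{0,1\}^E$ (1 = open, 0 = closed), a spin configuration is $\sigma\in\{-1,1\}^V$. For $e=\langle x,y\rangle$, $\delta_\sigma(e)=\mathbf 1_{\sigma(x)=\sigma(y)}$. The set of compatible pairs is $\mathcal C=\{(\eta,\sigma):\eta(e)\le\delta_\sigma(e)\ \forall e\in E\}$. The Ising–FK coupling measure is $IP(\eta,\sigma)=\frac1Z\prod_{e\in E}\big(p\mathbf 1_{\eta(e)=1}\delta_\sigma(e)+(1-p)\mathbf 1_{\eta(e)=0}\big)$, with $Z$ the normalizing constant. $E_x$ is the set of edges having $x$ as an endvertex, and $\sigma^x$ is $\sigma$ with the spin at $x$ flipped. *)

(* Defs.v *)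
From mathcomp Require Import all_boot all_order all_algebra.
Set Implicit Arguments. Unset Strict Implicit. Unset Printing Implicit Defensive.
Import Order.TTheory GRing.Theory Num.Theory.
Local Open Scope ring_scope.

(* A finite graph: vertices V : finType, edges E : finType, each edge e having
   endpoints (ends e).1 and (ends e).2 (unoriented: only the set {x,y} matters).
   Spins in {-1,1} are encoded as booleans (true = +1, false = -1);
   edge states: true = open, false = closed. *)

Definition simple_graph (V E : finType) (ends : E -> V * V) : Prop :=
  (forall e, (ends e).1 <> (ends e).2) /\
  (forall e f, [set (ends e).1; (ends e).2] = [set (ends f).1; (ends f).2] -> e = f).

Definition econf (E : finType) := {ffun E -> bool}.
Definition sconf (V : finType) := {ffun V -> bool}.
Definition state (V E : finType) := (econf E * sconf V)%type.

Definition delta (V E : finType) (ends : E -> V * V) (s : sconf V) (e : E) : bool :=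
  s (ends e).1 == s (ends e).2.

Definition compatible (V E : finType) (ends : E -> V * V) (c : state V E) : bool :=
  [forall e, c.1 e ==> delta ends c.2 e].

Definition ES_weight (R : numFieldType) (V E : finType) (ends : E -> V * V) (p : R)
  (c : state V E) : R :=
  \prod_(e : E) (if c.1 e then p * (delta ends c.2 e)%:R else 1 - p).

Definition IP (R : numFieldType) (V E : finType) (ends : E -> V * V) (p : R)
  (c : state V E) : R :=
  ES_weight ends p c / \sum_(c' : state V E) ES_weight ends p c'.

Definition flip (V : finType) (s : sconf V) (x : V) : sconf V :=
  [ffun y => if y == x then ~~ s y else s y].

Definition incident (V E : finType) (ends : E -> V * V) (x : V) : {set E} :=
  [set e | ((ends e).1 == x) || ((ends e).2 == x)].

Definition ndiff (V E : finType) (c c' : state V E) : nat :=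
  #|[set e | c.1 e != c'.1 e]| + #|[set x | c.2 x != c'.2 x]|.

(* Main.v *)
Require Import Defs.
From mathcomp Require Import all_boot all_order all_algebra.
Import Order.TTheory GRing.Theory Num.Theory.
Local Open Scope ring_scope.

Theorem lemma1 (R : realFieldType) (V E : finType) (ends : E -> V * V)
  (Hsimple : simple_graph ends) (HE : (0 < #|E|)%N)
  (p : R) (Hp0 : 0 < p) (Hp1 : p < 1)
  (q : state V E -> state V E -> R)
  (Hqpos : forall c c', c != c' -> 0 <= q c c')
  (Hqloc : forall c c', (1 < ndiff c c')%N -> q c c' = 0)
  (Hrev : forall c c', IP ends p c * q c c' = IP ends p c' * q c' c)
  (eta : econf E) (sigma : sconf V)
  (Hcomp : compatible ends (eta, sigma)) :
  forall x : V, q (eta, sigma) (eta, flip sigma x) != 0 ->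
    forall e, e \in incident ends x -> eta e = false.
Proof.
move=> x Hq e He; apply/negP => Hee.
have Hp1' : 0 < 1 - p by rewrite subr_gt0.
have Wge0 : forall c : state V E, 0 <= ES_weight ends p c.
  move=> c; apply: prodr_ge0 => i _; case: (c.1 i); last exact: ltW.
  by apply: mulr_ge0; [exact: ltW | exact: ler0n].
have Wgt0 : 0 < ES_weight ends p (eta, sigma).
  apply: prodr_gt0 => i _ /=; case Hi: (eta i); last by [].
  move/forallP: Hcomp => /(_ i) /=; rewrite Hi /= => ->; by rewrite mulr1.
have Sgt0 : 0 < \sum_(c' : state V E) ES_weight ends p c'.
  rewrite (bigD1 (eta, sigma)) //=; apply: ltr_wpDr => //.
  by apply: sumr_ge0 => c _.
have Hdel : delta ends (flip sigma x) e = false.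
  move: He; rewrite inE /delta !ffunE.
  have [Hne _] := Hsimple; have := Hne e.
  move/forallP: Hcomp => /(_ e) /=; rewrite Hee /= /delta.
  case: (ends e) => a b /= /eqP Hab Hab'.
  case: eqP => Hax; case: eqP => Hbx //= _; subst.
  - by exfalso; apply: Hab'.
  - by move: Hab; case: (sigma x); case: (sigma _) => //= ->.
  - by move: Hab; case: (sigma x); case: (sigma _) => //= ->.
have W0 : ES_weight ends p (eta, flip sigma x) = 0.
  rewrite /ES_weight (bigD1 e) //= Hee Hdel /= mulr0 mul0r //.
have := Hrev (eta, sigma) (eta, flip sigma x).
rewrite {2}/IP W0 mul0r mul0r => /eqP.
rewrite mulf_eq0 (negbTE Hq) orbF /IP mulf_eq0 invr_eq0.
by rewrite (gt_eqF Wgt0) (gt_eqF Sgt0).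
Qed.
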